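(* Let $\langle E,\rightarrow\rangle$ be a computation and $b$ a regular predicate, and let $S$ denote the slice of $\langle E,\rightarrow\rangle$ with respect to $b$. Then: (1) $\mathrm{possibly}(b)$ holds iff $S$ has at least two strongly connected components; (2) $\mathrm{invariant}(b)$ holds iff $S$ and $\langle E,\rightarrow\rangle$ have the same set of consistent cuts; (3) $\mathrm{controllable}(b)$ holds iff $S$ has the same number of strongly connected components as $\langle E,\rightarrow\rangle$.
   Context: A computation is a directed graph $\langle E, \rightarrow\rangle$ whose vertices (events) are partitioned among processes, each with an initial and final event, whose path relation contains Lamport's happened-before relation, with all initial events in one strongly connected component and all final events in one. A vertex subset $C$ is a consistent cut if for every edge $(u,v)$, $v\in C$ implies $u\in C$; $\emptyset$ and $E$ are trivial. A predicate is evaluated on non-trivial consistent cuts; it is regular if whenever consistent cuts $C_1,C_2$ satisfy it, so do $C_1\cap C_2$ and $C_1\cup C_2$. The slice with respect to $b$ is a directed graph on $E$ whose consistent cuts include every consistent cut of the computation satisfying $b$ and which has the fewest consistent cuts among all such graphs. Modalities: $\mathrm{possibly}(b)$ holds if some non-trivial consistent cut of the computation satisfies $b$; $\mathrm{invariant}(b)$ holds if every non-trivial consistent cut satisfies $b$; $\mathrm{controllable}(b)$ holds if there is a maximal chain $\emptyset=C_0\subset C_1\subset\dots\subset C_m=E$ in the lattice of consistent cuts of the computation (ordered by inclusion) such that every non-trivial $C_j$ satisfies $b$. *)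

(* Defs.v *)
From mathcomp Require Import all_boot.
Set Implicit Arguments. Unset Strict Implicit. Unset Printing Implicit Defensive.

Definition consistent (E : finType) (g : rel E) (C : {set E}) : bool :=
  [forall u, forall v, g u v ==> (v \in C) ==> (u \in C)].

Definition nontrivial (E : finType) (C : {set E}) : bool :=
  (C != set0) && (C != setT).

Definition cuts (E : finType) (g : rel E) : {set {set E}} :=
  [set C | consistent g C].

Definition scc_count (E : finType) (g : rel E) : nat :=
  #|[set [set y | connect g x y && connect g y x] | x : E]|.

Definition happened_before (E : finType) (lo msg : rel E) : rel E :=
  fun x y => connect (fun a b => lo a b || msg a b) x y.

(* ⟨E,e⟩ is a computation: events E partitioned among processes P via [proc];
   [lo] is the (strict, total on each process) process order; [msg] the message
   relation; [init p]/[fin p] the initial/final event of process p. *)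
Definition is_computation (E P : finType) (e : rel E) (proc : E -> P)
    (lo msg : rel E) (init fin : P -> E) : Prop :=
  [/\ (forall x y, lo x y -> proc x = proc y),
      (forall x, ~~ lo x x),
      (forall x y z, lo x y -> lo y z -> lo x z),
      (forall x y, proc x = proc y -> x != y -> lo x y || lo y x) &
      (forall x y, msg x y -> proc x != proc y)] /\
      ((forall x y, x != y -> happened_before lo msg x y ->
                   ~~ happened_before lo msg y x))
  /\ [/\
      (forall p, proc (init p) = p /\ forall x, proc x = p -> x != init p -> lo (init p) x),
      (forall p, proc (fin p) = p /\ forall x, proc x = p -> x != fin p -> lo x (fin p)),
      (forall x y, happened_before lo msg x y -> connect e x y),
      (forall p q, connect e (init p) (init q)) &
      (forall p q, connect e (fin p) (fin q))].

(* Predicates are evaluated on non-trivial consistent cuts. *)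
Definition regular (E : finType) (e : rel E) (b : {set E} -> Prop) : Prop :=
  forall C1 C2, consistent e C1 -> nontrivial C1 -> b C1 ->
                consistent e C2 -> nontrivial C2 -> b C2 ->
    (nontrivial (C1 :&: C2) -> b (C1 :&: C2)) /\
    (nontrivial (C1 :|: C2) -> b (C1 :|: C2)).

Definition retains (E : finType) (e : rel E) (b : {set E} -> Prop) (g : rel E) : Prop :=
  forall C, consistent e C -> nontrivial C -> b C -> consistent g C.

Definition is_slice (E : finType) (e : rel E) (b : {set E} -> Prop) (S : rel E) : Prop :=
  retains e b S /\
  forall g : rel E, retains e b g -> #|cuts S| <= #|cuts g|.

Definition possibly (E : finType) (e : rel E) (b : {set E} -> Prop) : Prop :=
  exists C, [/\ consistent e C, nontrivial C & b C].

Definition always_inv (E : finType) (e : rel E) (b : {set E} -> Prop) : Prop :=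
  forall C, consistent e C -> nontrivial C -> b C.

Definition cut_chain (E : finType) (e : rel E) (Q : {set {set E}}) : Prop :=
  Q \subset cuts e /\
  forall C D, C \in Q -> D \in Q -> (C \subset D) || (D \subset C).

Definition maximal_cut_chain (E : finType) (e : rel E) (Q : {set {set E}}) : Prop :=
  cut_chain e Q /\ forall Q', cut_chain e Q' -> Q \subset Q' -> Q' = Q.

Definition controllable (E : finType) (e : rel E) (b : {set E} -> Prop) : Prop :=
  exists Q, maximal_cut_chain e Q /\ forall C, C \in Q -> nontrivial C -> b C.

(* Main.v *)
Require Import Defs.
From mathcomp Require Import all_boot.
From Stdlib Require Import ClassicalEpsilon.
Set Implicit Arguments. Unset Strict Implicit. Unset Printing Implicit Defensive.

Definition pb (P : Prop) : bool :=
  if excluded_middle_informative P then true else false.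
Lemma pbP P : reflect P (pb P).
Proof. rewrite /pb; case: excluded_middle_informative => h; by constructor. Qed.

Section G.
Variables (E : finType) (g : rel E).

Lemma consP (C : {set E}) : reflect (forall u v, g u v -> v \in C -> u \in C) (consistent g C).
Proof.
apply: (iffP forallP) => H.
  by move=> u v guv vC; move/forallP: (H u) => /(_ v); rewrite guv vC.
by move=> u; apply/forallP => v; apply/implyP => /H h; apply/implyP => /h.
Qed.

Lemma cons0 : consistent g set0.
Proof. by apply/consP => u v _; rewrite inE. Qed.
Lemma consT : consistent g setT.
Proof. by apply/consP => u v _; rewrite !inE. Qed.
Lemma consI (C D : {set E}) : consistent g C -> consistent g D -> consistent g (C :&: D).
Proof.
move=> /consP hC /consP hD; apply/consP => u v guv; rewrite !inE => /andP[a c].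
by rewrite (hC _ _ guv a) (hD _ _ guv c).
Qed.
Lemma consU (C D : {set E}) : consistent g C -> consistent g D -> consistent g (C :|: D).
Proof.
move=> /consP hC /consP hD; apply/consP => u v guv; rewrite !inE => /orP[a|c].
  by rewrite (hC _ _ guv a).
by rewrite (hD _ _ guv c) orbT.
Qed.

Lemma cons_conn (C : {set E}) u v : consistent g C -> connect g u v -> v \in C -> u \in C.
Proof.
move/consP=> H /connectP [p pth ->]; elim: p u pth => //= w p IH u /andP [guw pth] Hl.
exact: H guw (IH _ pth Hl).
Qed.

Definition scc x := [set y | connect g x y && connect g y x].
Definition comps := [set scc x | x : E].
Lemma scc_countE : scc_count g = #|comps|. Proof. by []. Qed.

Lemma scc_id x : x \in scc x. Proof. by rewrite inE connect0. Qed.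
Lemma scc_eq x y : y \in scc x -> scc y = scc x.
Proof.
rewrite inE => /andP[xy yx]; apply/setP => z; rewrite !inE; apply/andP/andP => -[a c].
  by split; [apply: connect_trans xy a| apply: connect_trans c yx].
by split; [apply: connect_trans yx a| apply: connect_trans c xy].
Qed.
Lemma cons_scc (C : {set E}) x y : consistent g C -> x \in C -> y \in scc x -> y \in C.
Proof. by move=> hC xC; rewrite inE => /andP[_ yx]; apply: cons_conn hC yx xC. Qed.

Definition down x := [set u | connect g u x].
Lemma cons_down x : consistent g (down x).
Proof.
apply/consP => u v guv; rewrite !inE => vx; apply: connect_trans vx.
exact: connect1.
Qed.

Definition mu (C : {set E}) := #|[set K in comps | K \subset C]|.
Lemma mu_le (C : {set E}) : mu C <= #|comps|.
Proof. by apply: subset_leq_card; apply/subsetP => K; rewrite inE => /andP[]. Qed.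
Lemma mu_lt (C D : {set E}) : consistent g D -> C \proper D -> mu C < mu D.
Proof.
move=> hD /properP [sCD [x xD xC]]; apply: proper_card; apply/properP; split.
  apply/subsetP => K; rewrite !inE => /andP[-> KC] /=; exact: subset_trans KC sCD.
exists (scc x).
  rewrite inE imset_f //=; apply/subsetP => y; exact: cons_scc hD xD.
by rewrite inE imset_f //=; apply/negP => /subsetP /(_ x (scc_id x)); apply/negP.
Qed.

Lemma chain_le Q : cut_chain g Q -> #|Q| <= #|comps|.+1.
Proof.
move=> [sQ cQ].
pose f C : 'I_#|comps|.+1 := inord (mu C).
have inj : {in Q &, injective f}.
  move=> C D CQ DQ /(congr1 val); rewrite /= !inordK ?ltnS ?mu_le // => eqmu.
  have hC : consistent g C by move/subsetP: sQ => /(_ C CQ); rewrite inE.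
  have hD : consistent g D by move/subsetP: sQ => /(_ D DQ); rewrite inE.
  apply/eqP; apply: contraT => neq.
  case/orP: (cQ C D CQ DQ) => sub.
    have: C \proper D by rewrite properEneq neq sub.
    by move/(mu_lt hD); rewrite eqmu ltnn.
  have: D \proper C by rewrite properEneq eq_sym neq sub.
  by move/(mu_lt hC); rewrite eqmu ltnn.
rewrite -(card_in_imset inj); apply: leq_trans (max_card _) _; by rewrite card_ord.
Qed.


Lemma chain_add Q (C : {set E}) : cut_chain g Q -> consistent g C ->
  (forall D, D \in Q -> (C \subset D) || (D \subset C)) -> cut_chain g (C |: Q).
Proof.
move=> [sQ cQ] hC hc; split.
  by apply/subsetP => D; rewrite !inE => /orP[/eqP->|/(subsetP sQ)]; rewrite ?inE.
move=> D F; rewrite !inE => /orP[/eqP->|DQ] /orP[/eqP->|FQ].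
- by rewrite subxx.
- exact: hc.
- by rewrite orbC hc.
- exact: cQ.
Qed.

Lemma maxchain_mem Q (C : {set E}) : maximal_cut_chain g Q -> consistent g C ->
  (forall D, D \in Q -> (C \subset D) || (D \subset C)) -> C \in Q.
Proof.
move=> [ch mx] hC hc; have := mx _ (chain_add ch hC hc) (subsetUr _ _) => eq.
by rewrite -eq setU11.
Qed.

Lemma maxchain_cons Q C : maximal_cut_chain g Q -> C \in Q -> consistent g C.
Proof. by move=> [[sQ _] _] /(subsetP sQ); rewrite inE. Qed.

Lemma maxchain_ge Q : maximal_cut_chain g Q -> #|comps|.+1 <= #|Q|.
Proof.
move=> mQ; have [[sQ cQ] mx] := mQ.
have Q0 : set0 \in Q by apply: maxchain_mem mQ (cons0) _ => D _; rewrite sub0set.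
have QT : setT \in Q by apply: maxchain_mem mQ (consT) _ => D _; rewrite subsetT orbT.
have hcons : forall F, F \in Q -> consistent g F by move=> F; exact: maxchain_cons mQ.
have inout : forall F k, F \in Q -> scc k :&: F != set0 -> k \in F.
  move=> F k FQ /set0Pn [y]; rewrite inE => /andP[yk yF].
  apply: cons_scc (hcons F FQ) yF _; rewrite (scc_eq yk); exact: scc_id.
pose psi K := [arg max_(C > set0 | (C \in Q) && (K :&: C == set0)) #|C|].
have psiP : forall K, [/\ psi K \in Q, K :&: psi K == set0 &
     forall F, F \in Q -> K :&: F == set0 -> #|F| <= #|psi K| ].
  move=> K; rewrite /psi; case: arg_maxnP; first by rewrite Q0 setI0 eqxx.
  move=> C /andP[CQ KC] mxC; split => // F FQ KF; apply: mxC; by rewrite FQ KF.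
have psiT : forall k, psi (scc k) != setT.
  move=> k; have [_ /eqP h _] := psiP (scc k); apply/eqP => eT.
  by move: h; rewrite eT setIT => /setP /(_ k); rewrite scc_id inE.
have inj : {in comps &, injective psi}.
  move=> K K' /imsetP [k _ ->] /imsetP [k' _ ->] eqpsi.
  apply/eqP; apply: contraT => neq.
  set C := psi (scc k).
  have [CQ /eqP KC mxC] := psiP (scc k).
  have [_ /eqP K'C mxC'] := psiP (scc k'); rewrite -/C -eqpsi -/C in K'C mxC'.
  have kC : k \notin C.
    by apply/negP => kC; move/setP: KC => /(_ k); rewrite inE scc_id kC inE.
  have k'C : k' \notin C.
    by apply/negP => hh; move/setP: K'C => /(_ k'); rewrite inE scc_id hh inE.
  pose D := [arg min_(F < setT | (F \in Q) && (k \in F)) #|F|].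
  have [DQ kD mnD] : [/\ D \in Q, k \in D & forall F, F \in Q -> k \in F -> #|D| <= #|F|].
    rewrite /D; case: arg_minnP; first by rewrite QT inE.
    move=> F /andP[FQ kF] mnF; split => // F' F'Q kF'; apply: mnF; by rewrite F'Q.
  have hD := hcons D DQ; have hC := hcons C CQ.
  have CD : C \proper D.
    case/orP: (cQ C D CQ DQ) => sub.
      rewrite properEneq sub andbT; apply/eqP => eCD; by rewrite eCD kD in kC.
    by move/subsetP: sub => /(_ k kD); rewrite (negbTE kC).
  have k'D : k' \in D.
    apply: contraT => k'D; have := mxC' D DQ.
    have -> : scc k' :&: D == set0.
      by apply: contraT => /(inout D k' DQ); rewrite (negbTE k'D).
    by move=> /(_ isT); rewrite leqNgt (proper_card CD).
  have between : forall F, F \in Q -> (F \subset C) || (D \subset F).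
    move=> F FQ; case/orP: (cQ F C FQ CQ) => [->//|sCF].
    case FC: (F \subset C) => //=.
    have CF : C \proper F by rewrite properEneq sCF andbT; apply/eqP => e; by rewrite e subxx in FC.
    have kF : k \in F.
      apply: (inout F k FQ); apply/negP => /eqP h; have := mxC F FQ (introT eqP h).
      by rewrite leqNgt (proper_card CF).
    case/orP: (cQ D F DQ FQ) => [//|sFD].
    case DF: (D \subset F) => //.
    have : F \proper D by rewrite properEneq sFD andbT; apply/eqP => e; by rewrite e subxx in DF.
    by move/proper_card; rewrite ltnNge mnD.
  have kDC : k \in D :\: C by rewrite inE kC kD.
  pose x := [arg min_(y < k in D :\: C) #|down y|].
  have [xDC mnx] : x \in D :\: C /\ forall y, y \in D :\: C -> #|down x| <= #|down y|.
    rewrite /x; case: arg_minnP => // y yDC mny; by split.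
  have minx : forall y, y \in D :\: C -> y \in down x -> y \in scc x.
    move=> y yDC; rewrite inE => yx.
    have sub : down y \subset down x.
      by apply/subsetP => u; rewrite !inE => uy; apply: connect_trans uy yx.
    have : down y == down x by rewrite eqEcard sub mnx.
    move/eqP => eq; have : x \in down y by rewrite eq inE connect0.
    by rewrite !inE => ->; rewrite yx.
  move: xDC; rewrite inE => /andP[xC xD].
  pose M := C :|: down x.
  have hM : consistent g M by apply: consU hC (cons_down x).
  have MQ : M \notin Q.
    apply/negP => MQ; case/orP: (between M MQ).
      move/subsetP => /(_ x); rewrite !inE connect0 orbT => /(_ isT).
      by rewrite (negbTE xC).
    move/subsetP => DM.
    have hk : forall z, z \in D -> z \notin C -> z \in scc x.
      move=> z zD zC; have := DM z zD; rewrite inE (negbTE zC) /= => zx.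
      by apply: minx zx; rewrite inE zC zD.
    by rewrite (scc_eq (hk k kD kC)) (scc_eq (hk k' k'D k'C)) eqxx in neq.
  suff : M \in Q by rewrite (negbTE MQ).
  apply: maxchain_mem mQ hM _ => F FQ.
  case/orP: (between F FQ) => sub.
    by rewrite (subset_trans sub (subsetUl _ _)) orbT.
  apply/orP; left; apply: subset_trans sub; apply/subUsetP; split.
    by case/properP: CD.
  apply/subsetP => u; rewrite inE => ux; exact: cons_conn hD ux xD.
have : #|comps| <= #|Q :\ setT|.
  rewrite -(card_in_imset inj); apply: subset_leq_card; apply/subsetP => C.
  case/imsetP => K /imsetP [k _ ->] ->; have [h _ _] := psiP (scc k).
  by rewrite !inE h psiT.
by rewrite (cardsD1 setT Q) QT.
Qed.

Lemma maxchain_card Q : maximal_cut_chain g Q -> #|Q| = #|comps|.+1.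
Proof.
move=> mQ; apply/eqP; rewrite eqn_leq maxchain_ge // andbT; apply: chain_le; by case: mQ.
Qed.

Definition chainb (Q : {set {set E}}) := pb (cut_chain g Q).

Lemma maxchain_ex Q0 : cut_chain g Q0 -> exists Q, maximal_cut_chain g Q /\ Q0 \subset Q.
Proof.
move=> c0.
pose Q := [arg max_(Q > Q0 | chainb Q && (Q0 \subset Q)) #|Q|].
have : chainb Q && (Q0 \subset Q) /\ forall Q', chainb Q' && (Q0 \subset Q') -> #|Q'| <= #|Q|.
  rewrite /Q; case: arg_maxnP; last by move=> *; split.
  by rewrite subxx andbT; apply/pbP.
move=> [/andP[/pbP cQ sQ] mxQ]; exists Q; split => //; split => // Q' cQ' sQQ'.
apply/eqP; rewrite eq_sym eqEcard sQQ' mxQ //; apply/andP; split; first by apply/pbP.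
exact: subset_trans sQ sQQ'.
Qed.


Lemma maxchain_0T Q : maximal_cut_chain g Q -> set0 \in Q /\ setT \in Q.
Proof.
move=> mQ; split.
  by apply: maxchain_mem mQ (cons0) _ => D _; rewrite sub0set.
by apply: maxchain_mem mQ (consT) _ => D _; rewrite subsetT orbT.
Qed.

Lemma G1 : 1 < #|comps| <-> exists C, consistent g C /\ nontrivial C.
Proof.
split.
  move=> h; have [|Q [mQ _]] := maxchain_ex (Q0 := set0).
    by split; [rewrite sub0set | move=> C D; rewrite inE].
  have [Q0 QT] := maxchain_0T mQ; have := maxchain_card mQ.
  have T0 : (setT : {set E}) != set0.
    have [K] : exists K, K \in comps by apply/set0Pn; rewrite -card_gt0 ltnW.
    case/imsetP => x _ _; apply/negP => /eqP e.
    by have := in_setT x; rewrite e inE.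
  rewrite (cardsD1 set0 Q) Q0 (cardsD1 setT (Q :\ set0)) !inE QT T0 /=.
  move=> [] eq.
  have [C] : exists C, C \in Q :\ set0 :\ setT by apply/set0Pn; rewrite -card_gt0; move: h; rewrite -eq.
  rewrite !inE => /andP[CT /andP[C0 CQ]]; exists C; split; first exact: maxchain_cons mQ CQ.
  by rewrite /nontrivial C0 CT.
move=> [C [hC /andP[C0 CT]]].
have [|Q [mQ sQ]] := maxchain_ex (Q0 := [set set0; C; setT]).
  split.
    by apply/subsetP => D; rewrite !inE => /orP[/orP[/eqP->|/eqP->]|/eqP->]; rewrite ?cons0 ?consT.
  move=> D F; rewrite !inE => /orP[/orP[/eqP->|/eqP->]|/eqP->] /orP[/orP[/eqP->|/eqP->]|/eqP->];
    by rewrite ?sub0set ?subsetT ?orbT ?subxx.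
have := maxchain_card mQ.
have CQ : C \in Q by apply: (subsetP sQ); rewrite !inE eqxx orbT.
have Q0 : set0 \in Q by apply: (subsetP sQ); rewrite !inE eqxx.
have QT : setT \in Q by apply: (subsetP sQ); rewrite !inE eqxx !orbT.
have T0 : (setT : {set E}) != set0.
  apply: contraNneq C0 => e; apply/eqP; apply/setP => x; rewrite inE.
  by have := in_setT x; rewrite e inE.
rewrite (cardsD1 set0 Q) Q0 (cardsD1 setT (Q :\ set0)) !inE QT T0 (cardsD1 C (Q :\ set0 :\ setT)) !inE CQ C0 CT /=.
by move=> [] <-; rewrite !ltnS.
Qed.

End G.

Section Slice.
Variables (E : finType) (e : rel E) (b : {set E} -> Prop) (S : rel E).
Hypothesis reg : regular e b.
Hypothesis sl : is_slice e b S.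

Definition Pb (C : {set E}) := consistent e C /\ (nontrivial C -> b C).

Lemma Pb0 : Pb set0. Proof. by split; [apply: cons0 | rewrite /nontrivial eqxx]. Qed.
Lemma PbT : Pb setT. Proof. by split; [apply: consT | rewrite /nontrivial eqxx andbF]. Qed.

Lemma PbI C1 C2 : Pb C1 -> Pb C2 -> Pb (C1 :&: C2).
Proof.
move=> [h1 b1] [h2 b2]; split; first exact: consI.
case: (boolP (nontrivial C1)) => n1; last first.
  move: n1; rewrite /nontrivial negb_and !negbK => /orP[/eqP->|/eqP->].
    by rewrite set0I eqxx.
  by rewrite setTI.
case: (boolP (nontrivial C2)) => n2; last first.
  move: n2; rewrite /nontrivial negb_and !negbK => /orP[/eqP->|/eqP->].
    by rewrite setI0 eqxx.
  by rewrite setIT.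
exact: (reg h1 n1 (b1 n1) h2 n2 (b2 n2)).1.
Qed.

Lemma PbU C1 C2 : Pb C1 -> Pb C2 -> Pb (C1 :|: C2).
Proof.
move=> [h1 b1] [h2 b2]; split; first exact: consU.
case: (boolP (nontrivial C1)) => n1; last first.
  move: n1; rewrite /nontrivial negb_and !negbK => /orP[/eqP->|/eqP->].
    by rewrite set0U.
  by rewrite setTU eqxx andbF.
case: (boolP (nontrivial C2)) => n2; last first.
  move: n2; rewrite /nontrivial negb_and !negbK => /orP[/eqP->|/eqP->].
    by rewrite setU0.
  by rewrite setUT eqxx andbF.
exact: (reg h1 n1 (b1 n1) h2 n2 (b2 n2)).2.
Qed.

Lemma key_back C : Pb C -> consistent S C.
Proof.
move=> [hC bC]; case: (boolP (nontrivial C)) => n.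
  by apply: sl.1 hC n (bC n).
move: n; rewrite /nontrivial negb_and !negbK => /orP[/eqP->|/eqP->].
  exact: cons0. exact: consT.
Qed.

Definition gb : rel E := fun x y => pb (forall D, Pb D -> y \in D -> x \in D).

Lemma gb_Pb C : consistent gb C -> Pb C.
Proof.
move=> /consP hC.
pose J y := \bigcap_(D | pb (Pb D /\ y \in D)) D.
have PJ : forall y, Pb (J y).
  move=> y; apply: (big_ind Pb PbT PbI) => D /pbP [] //.
have yJ : forall y, y \in J y by move=> y; apply/bigcapP => D /pbP [].
suff -> : C = \bigcup_(y in C) J y.
  by apply: (big_ind Pb Pb0 PbU) => y _.
apply/setP => z; apply/idP/idP => [zC|/bigcupP [y yC zJ]].
  by apply/bigcupP; exists z.
apply: hC yC; apply/pbP => D PD yD.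
by move/bigcapP: zJ; apply; apply/pbP.
Qed.

Lemma key C : consistent S C <-> Pb C.
Proof.
split; last exact: key_back.
have ret : retains e b gb.
  move=> D hD nD bD; apply/consP => u v /pbP h vD; exact: h D (conj hD (fun _ => bD)) vD.
have sub : cuts gb \subset cuts S.
  by apply/subsetP => D; rewrite !inE => /gb_Pb /key_back.
have : cuts gb == cuts S by rewrite eqEcard sub (sl.2 _ ret).
move/eqP => eq hS; apply: gb_Pb.
have : C \in cuts gb by rewrite eq inE.
by rewrite inE.
Qed.

End Slice.

Theorem theorem12 (E P : finType) (e : rel E) (proc : E -> P) (lo msg : rel E)
    (init fin : P -> E) (b : {set E} -> Prop) (S : rel E) :
  is_computation e proc lo msg init fin ->
  regular e b ->
  is_slice e b S ->
  [/\ possibly e b <-> 1 < scc_count S,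
      always_inv e b <-> cuts S = cuts e &
      controllable e b <-> scc_count S = scc_count e].
Proof.
move=> _ reg sl.
have K := key reg sl.
have cSe : forall C, C \in cuts S -> C \in cuts e.
  by move=> C; rewrite !inE => /K [].
split.
- rewrite scc_countE G1; split.
    move=> [C [hC nC bC]]; exists C; split => //; apply/K; split => //.
  move=> [C [hS nC]]; have [hC bC] := (K C).1 hS; exists C; split => //; exact: bC.
- split.
    move=> inv; apply/setP => C; rewrite !inE; apply/idP/idP => h.
      by case: ((K C).1 h).
    by apply/K; split => // n; exact: inv.
  move=> eq C hC nC; have : C \in cuts S by rewrite eq inE.
  by rewrite inE => /K [_]; apply.
- rewrite !scc_countE; split.
    move=> [Q [[[sQ cQ] mx] hb]].
    have mS : maximal_cut_chain S Q.
      split.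
        split => //; apply/subsetP => C CQ; rewrite inE; apply/K; split; last exact: hb.
        by move/subsetP: sQ => /(_ C CQ); rewrite inE.
      move=> Q' [sQ' cQ'] QQ'; apply: mx => //; split => //.
      by apply/subsetP => C /(subsetP sQ') /cSe.
    apply: succn_inj; rewrite -(maxchain_card mS).
    exact: (maxchain_card (conj (conj sQ cQ) mx)).
  move=> eq.
  have [|Q [mQ _]] := maxchain_ex (g := S) (Q0 := set0).
    by split; [rewrite sub0set | move=> C D; rewrite inE].
  have [[sQ cQ] mx] := mQ.
  have chQ : cut_chain e Q.
    by split => //; apply/subsetP => C /(subsetP sQ) /cSe.
  exists Q; split.
    split => // Q' ch' QQ'; apply/eqP; rewrite eq_sym eqEcard QQ' /=.
    by rewrite (maxchain_card mQ) eq; apply: chain_le.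
  move=> C CQ n; have := subsetP sQ C CQ; rewrite inE => /K [_]; by apply.
Qed.
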